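(* Let $R$ be as in the standing setup. Then $a_j\ge b_j$ for all $j=0,\ldots,e-1$.
   Context: Standing setup: $k$ is a field and $R$ is a complete local domain with $k\subseteq R\subseteq k[[t]]$, residue field $k$, maximal ideal $m$, and nonzero conductor $(R:k[[t]])\neq 0$. Let $v$ be the $t$-adic valuation, $S=v(R)=\{v(r): r\in R, r\neq 0\}$, $e$ the smallest positive element of $S$, and $w_j$ the smallest element of $S$ congruent to $j\pmod e$. For a nonzero ideal $I$, $v(I)=\{v(a): a\in I, a\ne0\}$; $m^0=R$. Set $b_j=\max\{i: w_j\in v(m^i)\}$. Let $R'=\bigcup_{n\ge0}(m^n:m^n)$ be the blowup (first neighborhood ring) of $R$, a subring of $k[[t]]$; let $w'_j$ be the smallest element of $v(R')$ congruent to $j\pmod e$, and define $a_j$ by $w'_j=w_j-a_je$. *)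

(* Defs.v *)
(* Formal power series k[[t]] are modelled as coefficient
   functions nat -> k with the Cauchy product. *)
From HB Require Import structures.
From mathcomp Require Import all_boot all_order all_algebra.
Set Implicit Arguments. Unset Strict Implicit. Unset Printing Implicit Defensive.
Import GRing.Theory.

Local Open Scope ring_scope.

Definition ps (k : fieldType) := nat -> k.
Definition pconst (k : fieldType) (c : k) : ps k :=
  fun n => if n is 0%N then c else 0.
Definition padd (k : fieldType) (f g : ps k) : ps k := fun n => f n + g n.
Definition popp (k : fieldType) (f : ps k) : ps k := fun n => - f n.
Definition pmul (k : fieldType) (f g : ps k) : ps k :=
  fun n => \sum_(i < n.+1) f i * g (n - i)%N.

Definition is_subring (k : fieldType) (R : ps k -> Prop) : Prop :=
  [/\ (forall c : k, R (pconst c)),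
      (forall f g, R f -> R g -> R (padd f g)),
      (forall f, R f -> R (popp f)) &
      (forall f g, R f -> R g -> R (pmul f g))].

(* t-adic valuation as a relation: v(f) = n  (this forces f <> 0) *)
Definition tval (k : fieldType) (f : ps k) (n : nat) : Prop :=
  f n != 0 /\ forall i, (i < n)%N -> f i = 0.

Definition vals (k : fieldType) (P : ps k -> Prop) (s : nat) : Prop :=
  exists f, P f /\ tval f s.

(* maximal ideal m of R (kernel of R -> k, residue field k) *)
Definition maxideal (k : fieldType) (R : ps k -> Prop) (f : ps k) : Prop :=
  R f /\ f 0%N = 0.

Inductive idealprod (k : fieldType) (I J : ps k -> Prop) : ps k -> Prop :=
  | ip_mul a b : I a -> J b -> idealprod I J (pmul a b)
  | ip_add x y : idealprod I J x -> idealprod I J y -> idealprod I J (padd x y).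

Fixpoint mpow (k : fieldType) (R : ps k -> Prop) (n : nat) : ps k -> Prop :=
  match n with
  | 0%N => R
  | n'.+1 => idealprod (maxideal R) (mpow R n')
  end.

Definition colon_self (k : fieldType) (I : ps k -> Prop) (x : ps k) : Prop :=
  forall y, I y -> I (pmul x y).

Definition blowup (k : fieldType) (R : ps k -> Prop) (x : ps k) : Prop :=
  exists n, colon_self (mpow R n) x.

Definition is_least (P : nat -> Prop) (n : nat) : Prop :=
  P n /\ forall m, P m -> (n <= m)%N.
Definition is_greatest (P : nat -> Prop) (n : nat) : Prop :=
  P n /\ forall m, P m -> (m <= n)%N.

(* Main.v *)
Require Import Defs.
From HB Require Import structures.
From mathcomp Require Import all_boot all_order all_algebra.
From Stdlib Require Import Lia FunctionalExtensionality Classical ClassicalEpsilon.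
Set Implicit Arguments. Unset Strict Implicit. Unset Printing Implicit Defensive.
Import GRing.Theory.
Local Open Scope ring_scope.

Ltac tolia := repeat match goal with
 | H : is_true (leq _ _) |- _ => move/leP: H => H
 | |- is_true (leq _ _) => apply/leP
 end; unfold addn, subn, muln, addn_rec, subn_rec, muln_rec in *; lia.

Section PS.
Variable k : fieldType.
Implicit Types f g h : ps k.

Definition tr (N : nat) f : {poly k} := \poly_(i < N) f i.

Lemma coef_tr N f i : (tr N f)`_i = if (i < N)%N then f i else 0.
Proof. by rewrite /tr coef_poly. Qed.

Lemma pmul_tr N f g n : (n < N)%N -> pmul f g n = (tr N f * tr N g)`_n.
Proof.
move=> hn; rewrite coefM /pmul; apply: eq_bigr => i _.
rewrite !coef_tr.
have h1 : (i < N)%N by move: (ltn_ord i) => ?; tolia.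
have h2 : (n - i < N)%N by tolia.
by rewrite h1 h2.
Qed.

Lemma coefM_agree (p p' q q' : {poly k}) n :
  (forall i, (i <= n)%N -> p`_i = p'`_i) -> (forall i, (i <= n)%N -> q`_i = q'`_i) ->
  (p * q)`_n = (p' * q')`_n.
Proof.
move=> hp hq; rewrite !coefM; apply: eq_bigr => i _.
rewrite hp ?hq //; last by rewrite -ltnS.
by rewrite leq_subr.
Qed.

Lemma pmulC f g : pmul f g = pmul g f.
Proof.
apply: functional_extensionality => n.
by rewrite (pmul_tr _ _ (ltnSn n)) (pmul_tr _ _ (ltnSn n)) mulrC.
Qed.

Lemma pmulA f g h : pmul f (pmul g h) = pmul (pmul f g) h.
Proof.
apply: functional_extensionality => n.
rewrite (pmul_tr _ _ (ltnSn n)) (pmul_tr _ _ (ltnSn n)).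
transitivity ((tr n.+1 f * (tr n.+1 g * tr n.+1 h))`_n).
  apply: coefM_agree => // i hi; rewrite coef_tr ltnS hi.
  by rewrite (pmul_tr _ _ (leq_ltn_trans hi (ltnSn n))).
rewrite mulrA; apply: coefM_agree => // i hi; rewrite coef_tr ltnS hi.
by rewrite (pmul_tr _ _ (leq_ltn_trans hi (ltnSn n))).
Qed.

Lemma pmulDr f g h : pmul f (padd g h) = padd (pmul f g) (pmul f h).
Proof.
apply: functional_extensionality => n.
by rewrite /pmul /padd -big_split /=; apply: eq_bigr => i _; rewrite mulrDr.
Qed.

Lemma pmulDl f g h : pmul (padd g h) f = padd (pmul g f) (pmul h f).
Proof. by rewrite pmulC pmulDr !(pmulC f). Qed.

Lemma pmul_const c f : pmul (pconst c) f = fun n => c * f n.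
Proof.
apply: functional_extensionality => n.
rewrite /pmul big_ord_recl /= subn0 big1 ?addr0 // => i _.
by rewrite /pconst /= mul0r.
Qed.

Lemma pmul1 f : pmul (pconst 1) f = f.
Proof. by rewrite pmul_const; apply: functional_extensionality => n; rewrite mul1r. Qed.

Lemma pmulNr f g : pmul f (popp g) = popp (pmul f g).
Proof.
apply: functional_extensionality => n.
by rewrite /pmul /popp -sumrN; apply: eq_bigr => i _; rewrite mulrN.
Qed.

Definition zb f m := forall i, (i < m)%N -> f i = 0.

Lemma zb_mul f g a b : zb f a -> zb g b -> zb (pmul f g) (a + b).
Proof.
move=> hf hg n hn; rewrite /pmul big1 // => i _.
case: (ltnP i a) => hi; first by rewrite hf ?mul0r.
rewrite hg ?mulr0 //; move: (ltn_ord i) => ?; tolia.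
Qed.

Lemma zb_add f g a : zb f a -> zb g a -> zb (padd f g) a.
Proof. by move=> hf hg i hi; rewrite /padd hf ?hg ?addr0. Qed.

Lemma tval_zb f a : Defs.tval f a -> zb f a.
Proof. by case. Qed.

Lemma tval_mul f g a b : Defs.tval f a -> Defs.tval g b -> Defs.tval (pmul f g) (a + b).
Proof.
move=> [fa hf] [gb hg]; split; last exact: zb_mul.
have ha : (a < (a + b).+1)%N by rewrite ltnS leq_addr.
rewrite /pmul (bigD1 (Ordinal ha)) //= big1 ?addr0; first by rewrite addKn mulf_neq0.
move=> [i hi0] hi.
have hia : i != a by apply: contraNneq hi => e; apply/eqP; apply: val_inj; exact: e.
case: (ltnP i a) => h; first by rewrite /= hf ?mul0r.
have h2 : (a < i)%N by rewrite ltn_neqAle eq_sym hia h.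
rewrite /= hg ?mulr0 //; clear hi; tolia.
Qed.

Lemma tval_ex f n : f n != 0 -> exists m, Defs.tval f m /\ (m <= n)%N.
Proof.
move=> hn.
have ex : exists i, f i != 0 by exists n.
case: (ex_minnP ex) => m hm hmin; exists m; split; last exact: hmin.
split=> // i hi; apply/eqP; apply: contraTT hi => /hmin; rewrite leqNgt.
by [].
Qed.

Lemma tval_uniq f a b : Defs.tval f a -> Defs.tval f b -> a = b.
Proof.
move=> [fa ha] [fb hb]; case: (ltngtP a b) => // h.
  by move: fa; rewrite (hb _ h) eqxx.
by move: fb; rewrite (ha _ h) eqxx.
Qed.

Lemma pmul_zero_rhs f g : (forall i, g i = 0) -> forall n, pmul f g n = 0.
Proof. by move=> hg n; rewrite /pmul big1 // => i _; rewrite hg mulr0. Qed.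

Lemma pmul_cancel a f g n0 : Defs.tval a n0 -> pmul a f = pmul a g -> f = g.
Proof.
move=> ha e; apply: functional_extensionality => i.
apply/eqP; rewrite -subr_eq0; apply/negP => /negP hne.
have hd : (padd f (popp g)) i != 0 by [].
case: (tval_ex hd) => u [hu _].
have := tval_mul ha hu; rewrite pmulDr pmulNr e => [[hnz _]].
by move: hnz; rewrite /padd /popp subrr eqxx.
Qed.


Section Div.
Variables (g h : ps k) (d : nat).
Hypothesis hg : Defs.tval g d.
Hypothesis hh : zb h d.

Definition step (s : seq k) (n : nat) : k :=
  (h (n + d) - \sum_(l < n) g (d + l.+1) * nth 0 s (n - l.+1)) / g d.
Fixpoint qs n : seq k := if n is n'.+1 then rcons (qs n') (step (qs n') n') else [::].
Definition qq n := nth 0 (qs n.+1) n.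

Lemma size_qs n : size (qs n) = n.
Proof. by elim: n => //= n IH; rewrite size_rcons IH. Qed.

Lemma nth_qs n i : (i < n)%N -> nth 0 (qs n) i = qq i.
Proof.
elim: n => // n IH hi; rewrite /= nth_rcons size_qs.
case: (ltnP i n) => h1; first exact: IH.
have -> : i = n by apply/eqP; rewrite eqn_leq h1 -ltnS hi.
by rewrite /qq /= nth_rcons size_qs ltnn eqxx.
Qed.

Lemma qq_eq n : qq n = step (qs n) n.
Proof. by rewrite /qq /= nth_rcons size_qs ltnn eqxx. Qed.

Lemma key n : \sum_(l < n.+1) g (d + l) * qq (n - l) = h (n + d).
Proof.
rewrite big_ord_recl /= subn0 qq_eq /step.
have -> : g (d + 0)%N = g d by rewrite addn0.
set S := \sum_(l < n) _.
have -> : \sum_(i < n) g (d + bump 0 i) * qq (n - bump 0 i) = S.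
  apply: eq_bigr => i _; rewrite /bump leq0n add1n nth_qs //.
  move: (ltn_ord i) => ?; tolia.
case: hg => hgd _.
by rewrite [g d * _]mulrC divfK // subrK.
Qed.

Lemma div_ex : exists q, pmul g q = h.
Proof.
exists qq; apply: functional_extensionality => m.
case: (ltnP m d) => hm.
  rewrite hh // /pmul big1 // => i _.
  case: hg => _ hz; rewrite hz ?mul0r //; move: (ltn_ord i) => ?; tolia.
have -> : m = ((m - d) + d)%N by rewrite subnK.
set n := (m - d)%N.
rewrite /pmul -(big_mkord xpredT (fun i => g i * qq (n + d - i))).
rewrite (big_cat_nat (leq0n d)) /=; last by apply: leqW; rewrite leq_addl.
rewrite big_nat big1 ?add0r; last first.
  move=> i /andP [_ hi]; case: hg => _ hz; by rewrite hz ?mul0r.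
rewrite -{1}(add0n d) big_addn.
have -> : ((n + d).+1 - d = n.+1)%N by rewrite -addSn addnK.
rewrite big_mkord -(key n); apply: eq_bigr => i _.
rewrite addnC; congr (_ * qq _); tolia.
Qed.
End Div.

Lemma div_zb g h q d m : Defs.tval g d -> pmul g q = h -> zb h (d + m) -> zb q m.
Proof.
move=> hg e hz i hi; apply/eqP; apply/negP => /negP hq.
case: (tval_ex hq) => u [hu hui].
have := tval_mul hg hu; rewrite e => [[hne _]].
by move: hne; rewrite hz ?eqxx // ltn_add2l; apply: leq_ltn_trans hi.
Qed.

Lemma pdiv g h d m : Defs.tval g d -> zb h (d + m) -> exists q, pmul g q = h /\ zb q m.
Proof.
move=> hg hz.
have hh : zb h d by move=> i hi; apply: hz; apply: leq_trans hi (leq_addr _ _).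
case: (div_ex hg hh) => q e; exists q; split => //; exact: div_zb hg e hz.
Qed.

Lemma descent (I I' : ps k -> Prop) C :
 (forall f, I f -> I' f) ->
 (forall f g, I f -> I g -> I (padd f g)) -> (forall c f, I f -> I (pmul (pconst c) f)) ->
 (forall f g, I' f -> I' g -> I' (padd f g)) -> (forall c f, I' f -> I' (pmul (pconst c) f)) ->
 (forall f s, I' f -> Defs.tval f s -> (s < C)%N -> exists g, I g /\ Defs.tval g s) ->
 (forall f, I' f -> zb f C -> I f) ->
 forall f, I' f -> I f.
Proof.
move=> hsub hIa hIs hI'a hI's hv hbig.
have H : forall m f, I' f -> zb f (C - m)%N -> I f.
  elim=> [|m IH] f hf hz; first by apply: hbig => //; rewrite -(subn0 C).
  case: (leqP C m) => hCm.
    by apply: (IH _ hf) => i hi; exfalso; tolia.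
  have hs : (C - m = (C - m.+1).+1)%N by tolia.
  set s := (C - m.+1)%N in hz hs.
  have hsC : (s < C)%N by rewrite /s; tolia.
  case: (eqVneq (f s) 0) => hfs.
    apply: (IH f hf); rewrite hs => i; rewrite ltnS leq_eqVlt => /orP [/eqP -> // | hi].
    exact: hz.
  case: (hv f s hf (conj hfs hz) hsC) => g [hgI hgt].
  case: (hgt) => hgs hgz.
  set c := f s / g s.
  have hf' : I (padd f (pmul (pconst (- c)) g)).
    apply: IH; first by apply: hI'a => //; apply: hI's; apply: hsub.
    rewrite hs => i; rewrite ltnS leq_eqVlt => /orP [/eqP -> | hi].
      by rewrite pmul_const /padd /c mulNr divfK // subrr.
    by rewrite pmul_const /padd hz // hgz // mulr0 addr0.
  have -> : f = padd (padd f (pmul (pconst (- c)) g)) (pmul (pconst c) g).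
    apply: functional_extensionality => n.
    by rewrite !pmul_const /padd mulNr subrK.
  by apply: hIa => //; apply: hIs.
move=> f hf; apply: (H C) => //; by move=> i; rewrite subnn.
Qed.

End PS.

Section Main.
Variables (k : fieldType) (R : ps k -> Prop).
Hypothesis hR : is_subring R.
Variable e : nat.
Hypothesis he : is_least (fun s => vals R s /\ (0 < s)%N) e.

Lemma Rconst c : R (pconst c). Proof. by case: hR. Qed.
Lemma Radd f g : R f -> R g -> R (padd f g). Proof. by case: hR => _ h _ _; apply: h. Qed.
Lemma Rmul f g : R f -> R g -> R (pmul f g). Proof. by case: hR => _ _ _ h; apply: h. Qed.

Lemma M_R n f : mpow R n f -> R f.
Proof.
elim: n f => [|n IH] f //=.
elim=> [a b [ha _] hb | y z _ hy _ hz]; first by apply: Rmul => //; apply: IH.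
exact: Radd.
Qed.

Lemma R_mul_m r a : R r -> maxideal R a -> maxideal R (pmul r a).
Proof.
move=> hr [ha a0]; split; first exact: Rmul.
by rewrite /pmul big_ord1 /= subnn a0 mulr0.
Qed.

Lemma M_add n f g : mpow R n f -> mpow R n g -> mpow R n (padd f g).
Proof. case: n => [|n] /=; [exact: Radd | exact: ip_add]. Qed.

Lemma M_mulR n r f : R r -> mpow R n f -> mpow R n (pmul r f).
Proof.
case: n => [|n] hr /=; first exact: Rmul.
elim=> [a b ha hb | y z _ hy _ hz].
  rewrite pmulA; apply: ip_mul => //; exact: R_mul_m.
rewrite pmulDr; exact: ip_add.
Qed.

Lemma M_mul a b f g : mpow R a f -> mpow R b g -> mpow R (a + b) (pmul f g).
Proof.
elim: a f => [|a IH] f hf hg; first by rewrite add0n; apply: M_mulR.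
rewrite addSn /=; elim: hf => [p q hp hq | y z _ hy _ hz].
  rewrite -pmulA; apply: ip_mul => //; exact: IH.
rewrite pmulDl; exact: ip_add.
Qed.

Lemma m_zb a : maxideal R a -> zb a e.
Proof.
move=> [ha a0] i hi; apply/eqP; apply/negP => /negP hai.
case: (tval_ex hai) => u [hu hui].
have u0 : (0 < u)%N.
  rewrite lt0n; apply/eqP => u0; case: hu => hu _; move: hu; by rewrite u0 a0 eqxx.
have := he.2 u (conj (ex_intro _ a (conj ha hu)) u0).
move=> heu; move: (leq_trans heu hui); by rewrite leqNgt hi.
Qed.

Lemma M_zb n f : mpow R n f -> zb f (n * e).
Proof.
elim: n f => [|n IH] f /=; first by move=> _ i; rewrite mul0n.
elim=> [a b ha hb | y z _ hy _ hz]; last exact: zb_add.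
rewrite mulSn; apply: zb_mul; [exact: m_zb | exact: IH].
Qed.

Variable x : ps k.
Hypothesis Rx : R x.
Hypothesis hx : Defs.tval x e.
Hypothesis e0 : (0 < e)%N.

Lemma mx : maxideal R x.
Proof. split => //; case: hx => _ h; exact: h. Qed.

Variables (x0 : ps k) (c0 : nat).
Hypothesis hx0 : Defs.tval x0 c0.
Hypothesis hc : forall y, R (pmul x0 y).

Lemma factA h : zb h c0 -> R h.
Proof.
move=> hz; have hz' : zb h (c0 + 0) by rewrite addn0.
by case: (pdiv hx0 hz') => q [<- _].
Qed.

Lemma factB n h : zb h (c0 + n * e)%N -> mpow R n h.
Proof.
elim: n h => [|n IH] h hz; first by apply: factA; move: hz; rewrite mul0n addn0.
have hz' : zb h (e + (c0 + n * e)) by rewrite addnCA -mulSn.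
case: (pdiv hx hz') => q [<- zq] /=.
apply: ip_mul; [exact: mx | exact: IH].
Qed.

Definition xp b := iter b (pmul x) (pconst 1).

Lemma tval_xp b : Defs.tval (xp b) (b * e).
Proof.
elim: b => [|b IH] /=.
  by split; [rewrite /pconst oner_neq0 | move=> i; rewrite mul0n].
by rewrite mulSn; apply: tval_mul.
Qed.

Lemma M_xp b n g : mpow R n g -> mpow R (b + n) (pmul (xp b) g).
Proof.
elim: b => [|b IH] hg /=; first by rewrite add0n pmul1.
rewrite -pmulA ?addSn /=; apply: ip_mul; [exact: mx | exact: IH].
Qed.

Definition T n s := exists f, mpow R n f /\ Defs.tval f (s + n * e).

Lemma T_succ n s : T n s -> T n.+1 s.
Proof.
move=> [f [hf ht]]; exists (pmul x f); split; first exact: (ip_mul mx hf).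
have -> : (s + n.+1 * e = e + (s + n * e))%N by rewrite mulSn addnCA.
exact: tval_mul.
Qed.

Lemma T_add m n s : T n s -> T (m + n) s.
Proof. elim: m => [|m IH] h //; rewrite addSn; apply: T_succ; exact: IH. Qed.

Lemma T_big n s : (c0 <= s)%N -> T n s.
Proof.
move=> hs.
exists (fun i => if i == (s + n * e)%N then 1 else 0); split.
  apply: factB => i hi; case: eqP => // ei; exfalso.
  rewrite ei in hi; move: hi; rewrite ltn_add2r ltnNge hs; by [].
split; first by rewrite eqxx oner_neq0.
move=> i hi; case: eqP => // ei; by rewrite ei ltnn in hi.
Qed.

Definition Tb n s : bool := if excluded_middle_informative (T n s) then true else false.
Lemma TbP n s : reflect (T n s) (Tb n s).
Proof. rewrite /Tb; case: excluded_middle_informative => h; by constructor. Qed.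

Definition cnt n := count (Tb n) (iota 0 c0).

Lemma count_strict (a a' : pred nat) l : (forall s, a s -> a' s) ->
  (exists s, s \in l /\ a' s /\ ~~ a s) -> (count a l < count a' l)%N.
Proof.
move=> ha; elim: l => [|y l IH] [s [hs [h1 h2]]] //=.
have hsub : (count a l <= count a' l)%N by apply: sub_count => z; apply: ha.
move: hs; rewrite inE => /orP [/eqP esy | hs].
  rewrite -esy (negbTE h2) h1 add0n add1n ltnS; exact: hsub.
have hy : (a y <= a' y)%N by case hay: (a y) => //; rewrite (ha y hay).
apply: (leq_ltn_trans (leq_add hy (leqnn _))); rewrite ltn_add2l.
apply: IH; exists s; split => //.
Qed.

Definition good b n := forall s, (s < c0)%N -> T (b + n) s -> T n s.

Lemma pig b i : (exists n, good b n) \/ (i <= cnt (i * b))%N.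
Proof.
elim: i => [|i IH]; first by right.
case: IH => [|hi]; first by left.
case: (classic (good b (i * b))) => hg; first by left; exists (i * b).
right.
have hex : exists s, s \in iota 0 c0 /\ Tb (b + i * b) s /\ ~~ Tb (i * b) s.
  apply: NNPP => hne; apply: hg => s hs hT; apply: NNPP => hnT; apply: hne.
  exists s; split; first by rewrite mem_iota.
  split; first by apply/TbP.
  by apply/negP => /TbP.
have hlt : (cnt (i * b) < cnt (i.+1 * b))%N.
  rewrite /cnt mulSn; apply: count_strict hex => s /TbP h; apply/TbP; exact: T_add.
exact: leq_ltn_trans hi hlt.
Qed.

Lemma exists_good b : exists n, good b n.
Proof.
case: (pig b c0.+1) => // h; exfalso.
have : (cnt (c0.+1 * b) <= c0)%N by rewrite /cnt; apply: leq_trans (count_size _ _) _; rewrite size_iota.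
by rewrite leqNgt (leq_trans _ h).
Qed.

Lemma blowup_elem b w f : mpow R b f -> Defs.tval f w ->
  exists y, blowup R y /\ Defs.tval y (w - b * e) /\ (b * e <= w)%N.
Proof.
move=> hf htw.
case: (exists_good b) => n hgood.
pose I := fun h => exists g, mpow R n g /\ h = pmul (xp b) g.
have hdesc : forall h, mpow R (b + n) h -> I h.
  apply: (@descent _ I _ (c0 + (b + n) * e)).
  - by move=> h [g [hg ->]]; exact: M_xp.
  - move=> h1 h2 [g1 [hg1 ->]] [g2 [hg2 ->]]; exists (padd g1 g2).
    by split; [exact: M_add | rewrite pmulDr].
  - move=> c h [g [hg ->]]; exists (pmul (pconst c) g); split.
      by apply: M_mulR => //; exact: Rconst.
    by rewrite !pmulA (pmulC (pconst c)).
  - by move=> ? ? ? ?; exact: M_add.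
  - by move=> c ? ?; apply: M_mulR => //; exact: Rconst.
  - move=> h s hh hts hsC.
    have hz := M_zb hh.
    have hs : ((b + n) * e <= s)%N.
      rewrite leqNgt; apply/negP => hlt; case: hts => hne _; by move: hne; rewrite hz // eqxx.
    set s' := (s - (b + n) * e)%N.
    have hT : T (b + n) s' by exists h; split => //; rewrite /s' subnK.
    have hs'c : (s' < c0)%N by rewrite /s'; move: hsC hs; set B := ((b + n) * e)%N => ? ?; tolia.
    case: (hgood s' hs'c hT) => g [hg htg].
    exists (pmul (xp b) g); split; first by exists g.
    have -> : s = (b * e + (s' + n * e))%N.
      move: hs; rewrite /s' mulnDl; set B := (b * e)%N; set N := (n * e)%N => ?; tolia.
    exact: tval_mul (tval_xp b) htg.
  - move=> h hh hz.
    have hz' : zb h (b * e + (c0 + n * e)).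
      by move: hz; rewrite mulnDl addnCA.
    case: (pdiv (tval_xp b) hz') => q [eq zq]; exists q; split => //.
    exact: factB.
have hbe : (b * e <= w)%N.
  rewrite leqNgt; apply/negP => hlt; case: htw => hne _; by move: hne; rewrite (M_zb hf) // eqxx.
have hz : zb f (b * e + (w - b * e)) by rewrite subnKC //; case: htw.
case: (pdiv (tval_xp b) hz) => y [ey zy].
have hy : y (w - b * e)%N != 0.
  apply/negP => /eqP y0.
  have zy' : zb y (w - b * e).+1.
    move=> i; rewrite ltnS leq_eqVlt => /orP [/eqP -> // | hi]; exact: zy.
  have := zb_mul (tval_zb (tval_xp b)) zy'.
  rewrite ey => zf; case: htw => hne _.
  have hw : (w < b * e + (w - b * e).+1)%N by rewrite addnS ltnS subnKC.
  by move: hne; rewrite (zf _ hw) eqxx.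
exists y; split; last by split.
exists n => g hg.
case: (hdesc _ (M_mul hf hg)) => g' [hg' eg'].
rewrite -ey -pmulA in eg'.
by rewrite (pmul_cancel (tval_xp b) eg').
Qed.

End Main.

Local Close Scope ring_scope.

Theorem mainTheorem7 (k : fieldType) (R : ps k -> Prop)
  (hR : is_subring R)
  (* R is local with residue field k: elements with nonzero constant term are units of R *)
  (hloc : forall f, R f -> f 0%N != 0%R ->
            exists g, R g /\ forall n, pmul f g n = pconst 1%R n)
  (* nonzero conductor (R : k[[t]]) *)
  (hcond : exists x : ps k, (exists n, x n != 0%R) /\ forall y, R (pmul x y))
  (e : nat) (he : is_least (fun s => vals R s /\ (0 < s)%N) e)
  (j : nat) (hj : (j < e)%N)
  (w : nat) (hw : is_least (fun s => vals R s /\ s = j %[mod e]) w)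
  (w' : nat) (hw' : is_least (fun s => vals (blowup R) s /\ s = j %[mod e]) w')
  (b : nat) (hb : is_greatest (fun i => vals (mpow R i) w) b) :
  exists a : nat, w' + a * e = w /\ (b <= a)%N.
Proof.
case: hcond => x0 [[n0 hn0] hc].
case: (tval_ex hn0) => c0 [hx0 _].
have [[[x [Rx hx]] e0] _] := he.
have [[f [hf htw]] _] := hb.
case: (blowup_elem hR he Rx hx e0 hx0 hc hf htw) => y [hy [hty hbe]].
have hcong : (w - b * e)%N = j %[mod e].
  by rewrite -(modnMDl b (w - b * e)) subnKC // hw.1.2.
have h1 : (w' <= w - b * e)%N.
  apply: hw'.2; split => //; by exists y.
have h2 : (w' <= w)%N by apply: leq_trans h1 (leq_subr _ _).
have hdiv : (e %| w - w')%N.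
  by rewrite -eqn_mod_dvd // hw'.1.2 hw.1.2.
exists ((w - w') %/ e)%N; split.
  by rewrite divnK // subnKC.
rewrite -(leq_pmul2r e0) divnK //.
move: h1 hbe h2; set B := (b * e)%N => ? ? ?; tolia.
Qed.
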